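(* If $p\in\mathbb{N}$ is odd, then there does not exist a UPB in $(\mathbb{C}^2)^{\otimes p}$ consisting of exactly $p+2$ states.
   Context: A product state in $(\mathbb{C}^2)^{\otimes p}$ is a vector $|v_1\rangle\otimes\cdots\otimes|v_p\rangle$ with each $|v_j\rangle\in\mathbb{C}^2$. A $p$-qubit unextendible product basis (UPB) is a finite set $\mathcal{S}\subseteq(\mathbb{C}^2)^{\otimes p}$ of unit product vectors that are pairwise orthogonal, such that no nonzero product vector outside $\mathcal{S}$ is orthogonal to every element of $\mathcal{S}$. The size (number of states) of a UPB is its number of elements. *)

(* Defs.v *)
(* The scalar field C is modelled by an arbitrary
   numClosedFieldType (algebraically closed field with complex conjugation
   Num.conj), which covers the complex numbers. *)
From HB Require Import structures.
From mathcomp Require Import all_boot all_order all_algebra.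
Set Implicit Arguments. Unset Strict Implicit. Unset Printing Implicit Defensive.
Import Order.TTheory GRing.Theory Num.Theory.
Local Open Scope ring_scope.

(* Computational basis index set of (C^2)^{⊗p}: functions 'I_p -> 'I_2. *)
Definition qidx (p : nat) := {ffun 'I_p -> 'I_2}.

(* A vector of (C^2)^{⊗p}: its coordinates in the computational basis. *)
Definition qvec (C : numClosedFieldType) (p : nat) := {ffun qidx p -> C}.

Definition qubit (C : numClosedFieldType) := {ffun 'I_2 -> C}.

Definition tensor (C : numClosedFieldType) (p : nat) (v : 'I_p -> qubit C)
  : qvec C p := [ffun x : qidx p => \prod_(j < p) v j (x j)].

Definition inner (C : numClosedFieldType) (p : nat) (a b : qvec C p) : C :=
  \sum_(x : qidx p) (a x)^* * b x.

Definition is_product (C : numClosedFieldType) (p : nat) (w : qvec C p) : Prop :=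
  exists v : 'I_p -> qubit C, w = tensor v.

Definition is_unit (C : numClosedFieldType) (p : nat) (w : qvec C p) : Prop :=
  inner w w = 1.

(* A UPB, given as a duplicate-free list S (so its number of states is size S). *)
Definition is_UPB (C : numClosedFieldType) (p : nat) (S : seq (qvec C p)) : Prop :=
  [/\ uniq S,
      (forall s, s \in S -> is_product s /\ is_unit s),
      (forall s t, s \in S -> t \in S -> s != t -> inner s t = 0) &
      (forall w, is_product w -> w != 0 -> w \notin S ->
         exists2 s, s \in S & inner s w != 0)].

(* Main.v *)
Require Import Defs.
From HB Require Import structures.
From mathcomp Require Import all_boot all_order all_algebra.
From mathcomp Require Import zify ring.
From Stdlib Require Import ClassicalEpsilon.
Set Implicit Arguments. Unset Strict Implicit. Unset Printing Implicit Defensive.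
Import Order.TTheory GRing.Theory Num.Theory.

Record cfg (p : nat) := Cfg {
  ort : 'I_p -> 'I_p.+2 -> 'I_p.+2 -> bool;
  par : 'I_p -> 'I_p.+2 -> 'I_p.+2 -> bool;
  ort_sym : forall k a b, ort k a b = ort k b a;
  ort_irr : forall k a, ~~ ort k a a;
  par_refl : forall k a, par k a a;
  par_sym : forall k a b, par k a b = par k b a;
  ort_par : forall k x y z, ort k x y -> ort k x z -> par k y z;
  par_ort : forall k y z w, par k y z -> ort k y w -> ort k z w;
  all_ort : forall a b, a != b -> exists k, ort k a b;
  unext : forall f : 'I_p -> bool * 'I_p.+2, exists a, forall k,
     ~~ (if (f k).1 then ort k a (f k).2 else par k a (f k).2)
}.

Lemma arith1 p x : 0 < p -> 2 <= x -> x + p.-1 <= p -> False.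
Proof. move=> *; lia. Qed.
Lemma arith2 p x : 0 < p -> x + p.-1 <= p.+2 -> x <= 3.
Proof. move=> *; lia. Qed.
Lemma arith3 x : 4 <= x -> x <= 3 -> False.
Proof. move=> *; lia. Qed.

Section Comb.
Variable p : nat.
Variable c : cfg p.
Local Notation n := p.+2.
Local Notation V := 'I_p.+2.
Local Notation ort := (ort c).
Local Notation par := (par c).

Lemma par_nort k a b : par k a b -> ~~ ort k a b.
Proof.
move=> hp; apply/negP => ho.
by have := par_ort hp ho; rewrite (negbTE (ort_irr c k b)).
Qed.

Definition O (a b : V) : {set 'I_p} := [set k | ort k a b].

Lemma O_sym a b : O a b = O b a.
Proof. by apply/setP => k; rewrite !inE ort_sym. Qed.

Lemma O_self a : O a a = set0.
Proof. by apply/setP => k; rewrite !inE (negbTE (ort_irr c k a)). Qed.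

Lemma stepA a k : exists b, O a b == [set k].
Proof.
have [z hz] := unext c (fun j => if j == k then (false, a) else (true, a)).
exists z.
have hzk := hz k; rewrite eqxx /= in hzk.
have za : z != a by apply: contraNneq hzk => ->; rewrite par_refl.
have [j hj] := all_ort c za.
apply/eqP/setP => l; rewrite !inE.
apply/idP/idP.
  move=> hl; apply/negPn/negP => hlk.
  by have := hz l; rewrite (negbTE hlk) /= ort_sym hl.
move/eqP=> ->.
have jk : j == k.
  apply/negPn/negP => hjk.
  by have := hz j; rewrite (negbTE hjk) /= hj.
by rewrite -(eqP jk) ort_sym.
Qed.

Definition x a k := xchoose (stepA a k).

Lemma xP a k : O a (x a k) = [set k].
Proof. exact: (eqP (xchooseP (stepA a k))). Qed.

Lemma ort_x a k : ort k a (x a k).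
Proof. by have := xP a k => /setP/(_ k); rewrite !inE eqxx. Qed.

Lemma x_inj a : injective (x a).
Proof. by move=> k l e; apply/set1P; rewrite -(xP a l) -e xP set11. Qed.

Lemma x_neq a k : x a k != a.
Proof. by apply/negP => /eqP e; have := ort_x a k; rewrite e (negbTE (ort_irr _ _ _)). Qed.

Definition R a := ~: [set a] :\: [set x a k | k : 'I_p].

Lemma R_card a : #|R a| = 1.
Proof.
rewrite /R cardsD.
have -> : ~: [set a] :&: [set x a k | k : 'I_p] = [set x a k | k : 'I_p].
  apply/setIidPr/subsetP => y /imsetP [k _ ->].
  by rewrite !inE x_neq.
rewrite card_imset; last exact: x_inj.
by rewrite card_ord cardsC1 card_ord subSnn.
Qed.

Definition e a := odflt a [pick b in R a].

Lemma eR a : e a \in R a.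
Proof.
rewrite /e; case: pickP => [b hb //|h].
by have := R_card a; rewrite (eq_card0 h).
Qed.

Lemma eP1 a : e a != a.
Proof. by have := eR a; rewrite !inE => /andP [_ ]. Qed.

Lemma eP2 a k : x a k != e a.
Proof.
have := eR a; rewrite !inE => /andP [h _].
by apply: contraNneq h => <-; apply/imsetP; exists k.
Qed.

Lemma eU a b : b != a -> b != e a -> exists k, b = x a k.
Proof.
move=> ba be.
have : b \notin R a.
  have /cards1P [y hy] : #|R a| == 1 by rewrite R_card.
  have ey : e a = y by have := eR a; rewrite hy inE => /eqP.
  by rewrite hy inE -ey.
rewrite !inE ba /=.
by rewrite andbT negbK => /imsetP [k _ ->]; exists k.
Qed.

Lemma N_sub k a b : ort k a b -> b = x a k \/ b = e a.
Proof.
move=> h.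
have ba : b != a by apply: contraTneq h => ->; rewrite ort_irr.
case: (eqVneq b (e a)) => [->|be]; first by right.
left; have [l hl] := eU ba be.
suff -> : k = l by [].
apply/set1P; rewrite -(xP a l) -hl inE //.
Qed.

Definition Z k := [set a | ort k a (e a)].

Lemma notZ_uniq k y a d : y \notin Z k -> ort k y a -> ort k y d -> a = d.
Proof.
rewrite inE => hz ha hd.
case: (N_sub ha) => ea; last by rewrite -ea ha in hz.
case: (N_sub hd) => ed; last by rewrite -ed hd in hz.
by rewrite ea ed.
Qed.

Lemma Zin k y a d : ort k y a -> ort k y d -> a != d -> y \in Z k.
Proof.
move=> ha hd ad; apply/negPn/negP => hz.
by have := notZ_uniq hz ha hd; apply/eqP.
Qed.

Lemma K22 k a b : ort k a b -> a \in Z k -> b \in Z k ->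
  exists y d, [/\ y \in Z k, d \in Z k, y != d, (y != a) && (y != b) & (d != a) && (d != b)].
Proof.
move=> hab; rewrite !inE => ha hb.
pose y := if x a k == b then e a else x a k.
pose d := if x b k == a then e b else x b k.
have hy : ort k a y by rewrite /y; case: ifP => _ //; exact: ort_x.
have hd : ort k b d by rewrite /d; case: ifP => _ //; exact: ort_x.
have yb : y != b.
  rewrite /y; case: ifP => [/eqP <-|/negbT //]; by rewrite eq_sym eP2.
have da : d != a.
  rewrite /d; case: ifP => [/eqP <-|/negbT //]; by rewrite eq_sym eP2.
have hyd : ort k y d.
  have hp := ort_par hab hy.
  exact: par_ort hp hd.
exists y, d; split.
- apply: (@Zin k y a d); [by rewrite ort_sym| exact: hyd| by rewrite eq_sym].
- apply: (@Zin k d b y); [by rewrite ort_sym| by rewrite ort_sym| by rewrite eq_sym].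
- by apply: contraTneq hyd => ->; rewrite ort_irr.
- rewrite yb andbT; by apply: contraTneq hy => ->; rewrite ort_irr.
- rewrite da /=; by apply: contraTneq hd => ->; rewrite ort_irr.
Qed.

Lemma K22card k a b : ort k a b -> a \in Z k -> b \in Z k -> 4 <= #|Z k|.
Proof.
move=> hab ha hb.
have [y [d [hy hd yd /andP [ya yb] /andP [da db]]]] := K22 hab ha hb.
have ab : a != b by apply: contraTneq hab => ->; rewrite ort_irr.
have hsub : a |: (b |: [set y; d]) \subset Z k.
  by apply/subsetP => z /setU1P [->|/setU1P [->|/set2P [->|->]]].
have := subset_leq_card hsub.
rewrite cardsU1 cardsU1 cards2 yd !inE.
by rewrite (eq_sym a y) (eq_sym a d) (eq_sym b y) (eq_sym b d) (negbTE ab) (negbTE ya) (negbTE da) (negbTE yb) (negbTE db).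
Qed.


Lemma sum_ind (A : {set V}) : \sum_a (a \in A : nat) = #|A|.
Proof. rewrite -sum1_card [RHS]big_mkcond; apply: eq_bigr => i _; by case: (i \in A). Qed.

Definition D k := [set a | O a (e a) == [set k]].

Lemma U_eq k a : [set b | O a b == [set k]] =
  if a \in D k then [set x a k; e a] else [set x a k].
Proof.
apply/setP => b; rewrite inE.
have H : (O a b == [set k]) = (b == x a k) || ((b == e a) && (a \in D k)).
  apply/idP/idP.
    move/eqP => h.
    have ba : b != a.
      apply/negP => /eqP ba; move: h; rewrite ba O_self => /setP /(_ k).
      by rewrite !inE eqxx.
    case: (eqVneq b (e a)) => [be|be].
      by rewrite be inE -be h eqxx orbT.
    have [l hl] := eU ba be.
    have lk : l = k by apply/set1P; rewrite -h hl xP set11.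
    by rewrite hl lk eqxx.
  case/orP => [/eqP ->|/andP [/eqP -> hD]]; first by rewrite xP.
  by move: hD; rewrite inE.
rewrite H; case: (a \in D k); rewrite ?inE ?andbT ?andbF ?orbF //.
Qed.

Lemma U_card k a : #|[set b | O a b == [set k]]| = (a \in D k).+1.
Proof.
rewrite U_eq; case: (a \in D k); first by rewrite cards2 eP2.
by rewrite cards1.
Qed.

Lemma sym_even N (r : rel 'I_N) : symmetric r -> irreflexive r ->
  ~~ odd (\sum_a #|[set b | r a b]|).
Proof.
move=> rs ri.
have E : forall a, #|[set b | r a b]| = \sum_b ((r a b && (a < b)%N) + (r a b && (b < a)%N)).
  move=> a; rewrite -sum1_card [LHS]big_mkcond /=; apply: eq_bigr => b _.
  rewrite inE; case: (ltngtP a b) => h.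
  - by case: (r a b).
  - by case: (r a b).
  - have ba : b = a by apply: val_inj; rewrite /= h.
    by rewrite ba ri.
under eq_bigr do rewrite E big_split.
rewrite big_split /= [X in _ + X]exchange_big /=.
under [X in _ + X]eq_bigr => j _ do under eq_bigr => i _ do rewrite rs.
by rewrite addnn odd_double.
Qed.

Lemma Dnz k : odd p -> 0 < #|D k|.
Proof.
move=> op.
have := @sym_even n (fun a b => O a b == [set k]).
have -> : \sum_a #|[set b | O a b == [set k]]| = #|D k| + n.
  under eq_bigr do rewrite U_card.
  rewrite (eq_bigr (fun i => (i \in D k : nat) + 1)); last by move=> i _; rewrite addn1.
  by rewrite big_split /= sum_ind sum1_card card_ord.
case: (posnP #|D k|) => [->|//].
rewrite add0n /= negbK op.
move=> h; have := h _ _; apply; first by move=> a b; rewrite O_sym.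
by move=> a; rewrite O_self; apply/negP => /eqP /setP /(_ k); rewrite !inE eqxx.
Qed.

Definition W := [set a | [exists j, O a (e a) == [set j]]].

Lemma sumD : \sum_k #|D k| = #|W|.
Proof.
rewrite -sum_ind.
under eq_bigr do rewrite -sum_ind.
rewrite exchange_big /=; apply: eq_bigr => a _.
rewrite inE; case: existsP => [[j /eqP hj]|hn].
  rewrite (bigD1 j) //= big1 ?inE ?hj ?eqxx // => l lj.
  by rewrite inE hj (inj_eq set1_inj) eq_sym (negbTE lj).
by rewrite big1 // => l _; rewrite inE; case: eqP => // h; case: hn; exists l; rewrite h.
Qed.

Lemma sum_lb (F : 'I_p -> nat) j0 : (forall j, 0 < F j) -> F j0 + p.-1 <= \sum_j F j.
Proof.
move=> hF; rewrite (bigD1 j0) //= leq_add2l.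
have <- : \sum_(j | j != j0) 1 = p.-1 by rewrite sum1_card cardC1 card_ord.
by apply: leq_sum => j _; apply: hF.
Qed.

Lemma sum_lb1 (F : 'I_p -> nat) : (forall j, 0 < F j) -> p <= \sum_j F j.
Proof.
move=> hF; rewrite -{1}(card_ord p) -sum1_card.
by apply: leq_sum => j _; apply: hF.
Qed.


Lemma Mcase a : odd p -> a \notin W -> False.
Proof.
move=> op aW.
have [m em] : exists m, e a = m by exists (e a).
have am : a != m by rewrite -em eq_sym eP1.
have ema : e m = a.
  apply/eqP; apply/negPn/negP => h.
  have h2 : a != e m by rewrite eq_sym.
  have [l hl] := eU am h2.
  have hO : O a m = [set l] by rewrite O_sym hl xP.
  by move: aW; rewrite inE negb_exists => /forallP /(_ l); rewrite em hO eqxx.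
have mW : m \notin W.
  rewrite inE negb_exists; apply/forallP => j; rewrite ema O_sym -em.
  by move: aW; rewrite inE negb_exists => /forallP /(_ j).
have [k hk] := all_ort c am.
have ha : a \in Z k by rewrite inE em.
have hm : m \in Z k by rewrite inE ema ort_sym.
have [y [d [hy hd yd /andP [ya ym] /andP [da dm]]]] := K22 hk ha hm.
have hsub : W \subset ~: [set a; m].
  apply/subsetP => z hz; rewrite !inE; apply/norP; split; apply/negP => /eqP hz'.
    by rewrite -hz' hz in aW.
  by rewrite -hz' hz in mW.
have hcard : #|~: [set a; m]| = p.
  have := cardsC [set a; m]; rewrite cards2 am card_ord => h.
  by apply/eqP; rewrite -(eqn_add2l 2); apply/eqP.
have hsum := sumD.
have hlb : p <= #|W| by rewrite -hsum; apply: sum_lb1 => j; apply: Dnz.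
have WE : W = ~: [set a; m].
  by apply/eqP; rewrite eqEcard hsub hcard hlb.
have inD : forall z, z \in Z k -> z != a -> z != m -> z \in D k.
  move=> z hz za zm.
  have : z \in W by rewrite WE !inE negb_or za zm.
  rewrite !inE => /existsP [j /eqP hj].
  have : k \in O z (e z) by rewrite inE; move: hz; rewrite inE.
  by rewrite hj inE => /eqP ->.
have hD2 : 2 <= #|D k|.
  have hs : [set y; d] \subset D k.
    by apply/subsetP => z /set2P [->|->]; apply: inD.
  by have := subset_leq_card hs; rewrite cards2 yd.
have hlb2 := @sum_lb (fun j => #|D j|) k (fun j => Dnz j op).
rewrite hsum WE hcard in hlb2.
have p0 : 0 < p by move: op; case: (p).
exact: arith1 p0 hD2 hlb2.
Qed.

Lemma pair_single (allW : forall a, a \in W) a b : a != b -> exists j, O a b = [set j].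
Proof.
move=> ab; case: (eqVneq b (e a)) => [->|be].
  by have := allW a; rewrite inE => /existsP [j /eqP hj]; exists j.
have ba : b != a by rewrite eq_sym.
have [l ->] := eU ba be.
by exists l; rewrite xP.
Qed.

Lemma CovT (allW : forall a, a \in W) k i t u s :
  i != k -> par k t u -> ort i t u -> t \notin Z k -> ort k t s -> t \in Z i.
Proof.
move=> ik ptu otu tZ ots.
have [z hz] := unext c (fun j => if j == k then (false, t) else if j == i then (false, s) else (true, t)).
have hk := hz k; rewrite eqxx /= in hk.
have hi := hz i; rewrite (negbTE ik) eqxx /= in hi.
have zt : t != z by apply: contraNneq hk => <-; rewrite par_refl.
have zs : z != s by apply: contraNneq hi => ->; rewrite par_refl.
have zu : u != z by apply: contraNneq hk => <-; rewrite par_sym.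
have [j hj] := pair_single allW zt.
have otz : ort j t z by have := hj => /setP /(_ j); rewrite !inE eqxx.
case: (eqVneq j k) => [jk|jk].
  rewrite jk in otz.
  by have := notZ_uniq tZ otz ots; move/eqP; rewrite (negbTE zs).
case: (eqVneq j i) => [ji|ji].
  rewrite ji in otz; exact: Zin otu otz zu.
by have := hz j; rewrite (negbTE jk) (negbTE ji) /= ort_sym otz.
Qed.

Lemma Dcase : odd p -> (forall a, a \in W) -> False.
Proof.
move=> op allW.
have WT : #|W| = n.
  have -> : W = setT by apply/setP => a; rewrite allW inE.
  by rewrite cardsT card_ord.
have ZD : forall k, Z k = D k.
  move=> k; apply/setP => a.
  have := allW a; rewrite !inE => /existsP [j /eqP hj].
  have -> : ort k a (e a) = (k \in O a (e a)) by rewrite inE.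
  by rewrite hj inE (inj_eq set1_inj) eq_sym.
have le3 : forall j, #|Z j| <= 3.
  move=> j; rewrite ZD.
  have := @sum_lb (fun j => #|D j|) j (fun j => Dnz j op).
  rewrite sumD WT => h.
  have p0 : 0 < p by move: op; case: (p).
  exact: arith2 p0 h.
have p0 : 0 < p by move: op; case: (p).
pose k0 := Ordinal p0.
have /set0Pn [s hs] : D k0 != set0 by rewrite -card_gt0 Dnz.
rewrite -ZD in hs.
pose t := x s k0; pose u := e s.
have ost : ort k0 s t by apply: ort_x.
have osu : ort k0 s u by move: hs; rewrite inE.
have ptu : par k0 t u := ort_par ost osu.
have tu : t != u by apply: eP2.
have [i hi] := all_ort c tu.
have ik : i != k0.
  by apply/negP => /eqP ik; rewrite ik in hi; have := par_nort ptu; rewrite hi.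
have tZ : t \notin Z k0.
  apply/negP => ht; exact: arith3 (K22card ost hs ht) (le3 k0).
have uZ : u \notin Z k0.
  apply/negP => hu; exact: arith3 (K22card osu hs hu) (le3 k0).
have ots : ort k0 t s by rewrite ort_sym.
have ti : t \in Z i := CovT allW ik ptu hi tZ ots.
have ui : u \in Z i.
  have pu : par k0 u t by rewrite par_sym.
  have ou : ort i u t by rewrite ort_sym.
  have ous : ort k0 u s by rewrite ort_sym.
  exact: (CovT allW ik pu ou uZ ous).
exact: arith3 (K22card hi ti ui) (le3 i).
Qed.

Theorem comb_false : odd p -> False.
Proof.
move=> op; case: (boolP [forall a, a \in W]) => [/forallP h|].
  exact: Dcase op h.
by rewrite negb_forall => /existsP [a ha]; exact: Mcase op ha.
Qed.

End Comb.

Local Open Scope ring_scope.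

Section Alg.
Variable C : numClosedFieldType.

Definition in2 (a b : qubit C) : C := \sum_(i < 2) (a i)^* * b i.
Definition det2 (a b : qubit C) : C := a ord0 * b ord_max - a ord_max * b ord0.
Definition perp (y : qubit C) : qubit C :=
  [ffun i : 'I_2 => if i == ord0 then (y ord_max)^* else - (y ord0)^*].

Lemma ord2 (i : 'I_2) : i = ord0 \/ i = ord_max.
Proof. by case: i => [[|[|//]]] h; [left|right]; apply: val_inj. Qed.

Lemma in2E a b : in2 a b = (a ord0)^* * b ord0 + (a ord_max)^* * b ord_max.
Proof.
rewrite /in2 big_ord_recr big_ord1 /=.
have -> : widen_ord (leqnSn 1) ord0 = ord0 :> 'I_2 by apply: val_inj.
done.
Qed.

Lemma nz2 (a : qubit C) : a != 0 -> (a ord0 != 0) || (a ord_max != 0).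
Proof.
move=> h; apply/negPn/negP; rewrite negb_or !negbK => /andP [/eqP h0 /eqP h1].
move/eqP: h; apply; apply/ffunP => i; rewrite ffunE.
by case: (ord2 i) => ->.
Qed.

Lemma in2C a b : in2 b a = (in2 a b)^*.
Proof. rewrite !in2E rmorphD !rmorphM /= (conjCK (a ord0)) (conjCK (a ord_max)). by rewrite mulrC [X in _ + X]mulrC. Qed.

Lemma in2_self a : a != 0 -> in2 a a != 0.
Proof.
move=> /nz2 h; rewrite in2E (mulrC (a ord0)^*) (mulrC (a ord_max)^*).
rewrite paddr_eq0 ?mul_conjC_ge0 // !mul_conjC_eq0.
by rewrite negb_and.
Qed.

Lemma ortpar x y z : x != 0 -> in2 x y = 0 -> in2 x z = 0 -> det2 y z = 0.
Proof.
move=> /nz2 hx; rewrite !in2E /det2 => hy hz.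
have e0 : (x ord0)^* * det2 y z = z ord_max * ((x ord0)^* * y ord0 + (x ord_max)^* * y ord_max)
   - y ord_max * ((x ord0)^* * z ord0 + (x ord_max)^* * z ord_max) by rewrite /det2; ring.
have e1 : (x ord_max)^* * det2 y z = y ord0 * ((x ord0)^* * z ord0 + (x ord_max)^* * z ord_max)
   - z ord0 * ((x ord0)^* * y ord0 + (x ord_max)^* * y ord_max) by rewrite /det2; ring.
rewrite hy hz !mulr0 subr0 in e0 e1.
rewrite -/(det2 y z).
case/orP: hx => hx.
  by apply/eqP; move/eqP: e0; rewrite mulf_eq0 conjC_eq0 (negbTE hx).
by apply/eqP; move/eqP: e1; rewrite mulf_eq0 conjC_eq0 (negbTE hx).
Qed.

Lemma parort y z w : y != 0 -> det2 y z = 0 -> in2 y w = 0 -> in2 z w = 0.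
Proof.
move=> /nz2 hy; rewrite /det2 => hd; rewrite !in2E => hw.
have hc : (y ord0)^* * (z ord_max)^* - (y ord_max)^* * (z ord0)^* = 0.
  by rewrite -!rmorphM -rmorphB hd rmorph0.
have e0 : (y ord0)^* * ((z ord0)^* * w ord0 + (z ord_max)^* * w ord_max) =
  (z ord0)^* * ((y ord0)^* * w ord0 + (y ord_max)^* * w ord_max) +
  w ord_max * ((y ord0)^* * (z ord_max)^* - (y ord_max)^* * (z ord0)^*) by ring.
have e1 : (y ord_max)^* * ((z ord0)^* * w ord0 + (z ord_max)^* * w ord_max) =
  (z ord_max)^* * ((y ord0)^* * w ord0 + (y ord_max)^* * w ord_max) -
  w ord0 * ((y ord0)^* * (z ord_max)^* - (y ord_max)^* * (z ord0)^*) by ring.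
rewrite hw hc !mulr0 addr0 subr0 in e0 e1.
case/orP: hy => hy.
  by apply/eqP; move/eqP: e0; rewrite mulf_eq0 conjC_eq0 (negbTE hy).
by apply/eqP; move/eqP: e1; rewrite mulf_eq0 conjC_eq0 (negbTE hy).
Qed.

Lemma det2_refl a : det2 a a = 0.
Proof. by rewrite /det2 mulrC subrr. Qed.

Lemma det2_sym a b : (det2 a b == 0) = (det2 b a == 0).
Proof.
rewrite /det2 -[in RHS]eqr_opp oppr0 opprB.
by rewrite (mulrC (b ord0)) (mulrC (b ord_max)).
Qed.

Lemma perp_nz y : y != 0 -> perp y != 0.
Proof.
move=> /nz2 h; apply/negP => /eqP hp.
have h0 : perp y ord0 = 0 by rewrite hp ffunE.
have h1 : perp y ord_max = 0 by rewrite hp ffunE.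
rewrite !ffunE /= in h0 h1.
move: h; rewrite -(conjC_eq0 (y ord0)) -(conjC_eq0 (y ord_max)) h0 -oppr_eq0 h1 eqxx.
done.
Qed.

Lemma in2_perp x y : in2 x (perp y) = (det2 x y)^*.
Proof.
rewrite in2E /det2 !ffunE /=.
by rewrite rmorphB !rmorphM /= mulrN.
Qed.

Lemma inner_tensor p (v w : 'I_p -> qubit C) :
  inner (tensor v) (tensor w) = \prod_j in2 (v j) (w j).
Proof.
rewrite /inner /in2 bigA_distr_bigA /=.
apply: eq_bigr => f _; rewrite !ffunE rmorph_prod -big_split /=.
done.
Qed.

End Alg.

Theorem proposition3 (C : numClosedFieldType) (p : nat) :
  odd p -> ~ exists S : seq (qvec C p), is_UPB S /\ size S = p.+2.
Proof.
move=> op [S [[uS hps hort hun] hsz]].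
pose s (a : 'I_p.+2) := nth 0 S a.
have sS : forall a, s a \in S by move=> a; rewrite /s mem_nth // hsz.
have hv : forall a, {v : 'I_p -> qubit C | s a = tensor v}.
  move=> a; apply: constructive_indefinite_description.
  by case: (hps _ (sS a)).
pose V a := sval (hv a).
have sV : forall a, s a = tensor (V a) by move=> a; rewrite /V; case: (hv a).
have Vnz : forall a k, V a k != 0.
  move=> a k; apply/negP => /eqP h0.
  have := (hps _ (sS a)).2; rewrite /is_unit sV inner_tensor (bigD1 k) //= h0.
  rewrite /in2 big1 ?mul0r; last by move=> i _; rewrite ffunE mulr0.
  by move/eqP; rewrite eq_sym oner_eq0.
pose ortf := fun k (a b : 'I_p.+2) => in2 (V a k) (V b k) == 0.
pose parf := fun k (a b : 'I_p.+2) => det2 (V a k) (V b k) == 0.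
have h1 : forall k a b, ortf k a b = ortf k b a.
  by move=> k a b; rewrite /ortf in2C conjC_eq0.
have h2 : forall k a, ~~ ortf k a a by move=> k a; apply: in2_self.
have h3 : forall k a, parf k a a by move=> k a; rewrite /parf det2_refl.
have h4 : forall k a b, parf k a b = parf k b a by move=> k a b; apply: det2_sym.
have h5 : forall k x y z, ortf k x y -> ortf k x z -> parf k y z.
  by move=> k x y z /eqP hy /eqP hz; apply/eqP; apply: ortpar (Vnz x k) hy hz.
have h6 : forall k y z w, parf k y z -> ortf k y w -> ortf k z w.
  by move=> k y z w /eqP hy /eqP hz; apply/eqP; apply: parort (Vnz y k) hy hz.
have h7 : forall a b, a != b -> exists k, ortf k a b.
  move=> a b ab.
  have sab : s a != s b.
    by rewrite /s nth_uniq ?hsz.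
  have := hort _ _ (sS a) (sS b) sab; rewrite !sV inner_tensor => /eqP /prodf_eq0 [k _ hk].
  by exists k.
have h8 : forall f : 'I_p -> bool * 'I_p.+2, exists a, forall k,
     ~~ (if (f k).1 then ortf k a (f k).2 else parf k a (f k).2).
  move=> f.
  pose wv k := if (f k).1 then V (f k).2 k else perp (V (f k).2 k).
  have wnz : forall k, wv k != 0.
    by move=> k; rewrite /wv; case: (f k).1; [apply: Vnz| apply: perp_nz; apply: Vnz].
  pose w := tensor wv.
  case: (boolP [exists a, [forall k, ~~ (if (f k).1 then ortf k a (f k).2 else parf k a (f k).2)]]).
    by move=> /existsP [a /forallP h]; exists a.
  rewrite negb_exists => /forallP hn; exfalso.
  have hz : forall a, inner (s a) w = 0.
    move=> a; have := hn a; rewrite negb_forall => /existsP [k]; rewrite negbK => hc.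
    rewrite sV inner_tensor; apply/eqP/prodf_eq0; exists k => //.
    move: hc; rewrite /wv /ortf /parf; case: (f k) => [[] t] //= hc.
    by rewrite in2_perp conjC_eq0.
  have ww : inner w w != 0.
    by rewrite inner_tensor; apply/prodf_neq0 => k _; apply: in2_self.
  have wn0 : w != 0.
    apply: contraNneq ww => ->; rewrite /inner big1 // => y _; rewrite ffunE mulr0.
    done.
  have idx : forall t, t \in S -> exists a, s a = t.
    move=> t tS; have ht : (index t S < p.+2)%N by rewrite -hsz index_mem.
    by exists (Ordinal ht); rewrite /s /= nth_index.
  have wS : w \notin S.
    apply/negP => wS; have [a ha] := idx _ wS.
    by have := hz a; rewrite ha => /eqP; rewrite (negbTE ww).
  have [t tS ht] := hun w (ex_intro _ wv erefl) wn0 wS.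
  have [a ha] := idx _ tS.
  by have := hz a; rewrite ha => /eqP; rewrite (negbTE ht).
exact: (comb_false (Cfg h1 h2 h3 h4 h5 h6 h7 h8) op).
Qed.
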